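(* Let $\varphi:MU^*\otimes_{\mathbb{Z}}\mathbb{Q}\to\mathbb{C}$ be any complex-valued genus, with logarithm $\log_\varphi$ and characteristic power series $Q_\varphi(z)=z/\log_\varphi^{-1}(z)$. Then $\varphi$ has a unique representation as an element of the non-commutative probability space $(\tilde{\mathcal E}_1,\tilde\tau_1)$, given by the canonical operator $$A_\varphi=(1+l)\,\frac{1}{Q_\varphi}(l^* )=(1+l)\Big(\frac{\log_\varphi^{-1}(z)}{z}\Big)(l^* );$$ that is, $A_\varphi\in\tilde{\mathcal E}_1$, $\tilde\tau_1(A_\varphi)\neq0$, the $S$-transform of the $\tilde\tau_1$-distribution of $A_\varphi$ equals $Q_\varphi$, and distinct genera give distinct operators $A_\varphi$ (and distinct distributions).
   Context: $MU^*$ is the complex cobordism ring. A complex-valued genus is a ring homomorphism $\varphi:MU^*\otimes_{\mathbb{Z}}\mathbb{Q}\to\mathbb{C}$ with $\varphi(1)=1$. Its logarithm is $\log_\varphi(z)=\sum_{n\ge1}\frac{\varphi(\mathbb{C}P^{n-1})}{n}z^n$ (with $\mathbb{C}P^0:=1$), a power series $z+O(z^2)$, and $\log_\varphi^{-1}$ is its compositional inverse; $Q_\varphi\in1+z\mathbb{C}[[z]]$. Let $l,l^*$ be symbols with $l^*l=1$. $\tilde{\mathcal E}_1$ is the unital algebra of formal series $\sum_{m,n\ge0}\alpha_{mn}l^m(l^* )^n$ with $\alpha_{mn}\in\mathbb{C}$ and $\alpha_{mn}=0$ for almost all $m$, multiplied using $l^*l=1$; $\tilde\tau_1$ is the linear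 functional sending such a series to $\alpha_{00}$. For $f=\sum f_nz^n\in\mathbb{C}[[z]]$, $f(l^* )=\sum f_n(l^* )^n$. The $\tilde\tau_1$-distribution of $a\in\tilde{\mathcal E}_1$ is $\mu_a:\mathbb{C}[X]\to\mathbb{C}$, $\mu_a(X^k)=\tilde\tau_1(a^k)$. For a distribution $\mu$ with $\mu(X)\ne0$, with $M_\mu(z)=\sum_{n\ge1}\mu(X^n)z^n$, the $S$-transform is $S_\mu(z)=\frac{1+z}{z}M_\mu^{-1}(z)$ ($M_\mu^{-1}$ the compositional inverse). *)

(* Defs.v *)
From HB Require Import structures.
From mathcomp Require Import all_boot all_order all_algebra.
From mathcomp Require Import reals.
From mathcomp Require Export complex.
From Stdlib Require Import ClassicalEpsilon.

Set Implicit Arguments.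
Unset Strict Implicit.
Unset Printing Implicit Defensive.
Import Order.TTheory GRing.Theory Num.Theory.
Local Open Scope ring_scope.

Section Defs.
Variable F : fieldType.

Definition series := nat -> F.
Definition sone : series := fun n => (n == 0)%:R.
Definition sX : series := fun n => (n == 1)%:R.
Definition smul (f g : series) : series :=
  fun n => \sum_(i < n.+1) f i * g (n - i)%N.
Definition spow (f : series) (k : nat) : series := iter k (smul f) sone.
(* composition f(g(z)) (meaningful when g 0 = 0) *)
Definition scomp (f g : series) : series :=
  fun n => \sum_(k < n.+1) f k * spow g k n.
(* multiplicative inverse 1/f (exists uniquely when f 0 <> 0) *)
Definition sinv (f : series) : series :=
  epsilon (inhabits sone) (fun g => smul f g = sone).
(* compositional inverse f^{-1} (exists uniquely when f 0 = 0, f 1 <> 0) *)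
Definition is_cinv (f g : series) : Prop :=
  g 0%N = 0 /\ scomp f g = sX /\ scomp g f = sX.
Definition cinv (f : series) : series :=
  epsilon (inhabits sone) (is_cinv f).

(* A genus phi : MU^* (x) Q -> C is encoded by its values
   c n = phi(CP^n) (with c 0 = phi(CP^0) = phi(1) = 1). *)
Definition log_genus (c : nat -> F) : series :=
  fun n => if n is n'.+1 then c n' / n%:R else 0.
(* log_phi^{-1}(z) / z *)
Definition invlog_over_z (c : nat -> F) : series :=
  fun n => cinv (log_genus c) n.+1.
Definition Q_genus (c : nat -> F) : series := sinv (invlog_over_z c).

(* a = sum_{m,n} alpha_{mn} l^m (l^* )^n with finitely many m: stored as the
   finite list of rows (m = 0, 1, ...), row m being n |-> alpha_{mn}. *)
Definition E1 := seq series.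
Definition coefE1 (a : E1) (m n : nat) : F := nth (fun _ => 0) a m n.
(* product using l^* l = 1:
   (l^m l*^n)(l^p l*^q) = l^m l*^(n-p+q) if p <= n, l^(m+p-n) l*^q if n < p *)
Definition emul (a b : E1) : E1 :=
  mkseq (fun M : nat => fun N : nat =>
     \sum_(p < size b) \sum_(q < N.+1)
         coefE1 a M (N + p - q)%N * coefE1 b p q
   + \sum_(p < size b) \sum_(n < p)
         (if (p - n <= M)%N then coefE1 a (M - (p - n))%N n * coefE1 b p N
          else 0))
   (size a + size b).
Definition eone : E1 := [:: sone].
Definition epow (a : E1) (k : nat) : E1 := iter k (emul a) eone.
Definition tau1 (a : E1) : F := coefE1 a 0 0.
Definition ser_lstar (f : series) : E1 := [:: f].
Definition one_plus_l : E1 := [:: sone; sone].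

Definition distr (a : E1) (p : {poly F}) : F :=
  \sum_(i < size p) p`_i * tau1 (epow a i).
Definition moment_series (mu : {poly F} -> F) : series :=
  fun n => if n is 0 then 0 else mu ('X^n).
(* S_mu(z) = (1+z)/z * M_mu^{-1}(z) *)
Definition Stransform (mu : {poly F} -> F) : series :=
  fun n => cinv (moment_series mu) n.+1 + cinv (moment_series mu) n.

Definition A_genus (c : nat -> F) : E1 :=
  emul one_plus_l (ser_lstar (invlog_over_z c)).
End Defs.

(* Main.v *)
Require Import Defs.
From HB Require Import structures.
From mathcomp Require Import all_boot all_order all_algebra.
From mathcomp Require Import reals complex.
From mathcomp Require Import zify ring.
From Stdlib Require Import ClassicalEpsilon Classical FunctionalExtensionality.
Import Order.TTheory GRing.Theory Num.Theory.
Local Open Scope ring_scope.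


Section Gen.
Variable F : fieldType.
Implicit Types (f g h : series F) (p q : {poly F}).

Definition tr (K : nat) (f : series F) : {poly F} := \poly_(i < K) f i.
Lemma coef_tr K f i : (tr K f)`_i = if (i < K)%N then f i else 0.
Proof. exact: coef_poly. Qed.

Definition eqm (m : nat) p q := forall i, (i < m)%N -> p`_i = q`_i.

Lemma eqm_refl m p : eqm m p p. Proof. by []. Qed.
Lemma eqm_sym m p q : eqm m p q -> eqm m q p. Proof. by move=> h i /h ->. Qed.
Lemma eqm_trans m p q r : eqm m p q -> eqm m q r -> eqm m p r.
Proof. by move=> h1 h2 i hi; rewrite h1 // h2. Qed.
Lemma eqm_le m m' p q : (m' <= m)%N -> eqm m p q -> eqm m' p q.
Proof. by move=> hm h i hi; apply: h; apply: leq_trans hm. Qed.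
Lemma eqm_add m p q p' q' : eqm m p p' -> eqm m q q' -> eqm m (p + q) (p' + q').
Proof. by move=> h1 h2 i hi; rewrite !coefD h1 // h2. Qed.
Lemma eqm_scale m a p q : eqm m p q -> eqm m (a *: p) (a *: q).
Proof. by move=> h i hi; rewrite !coefZ h. Qed.
Lemma eqm_sum m n (P Q : 'I_n -> {poly F}) : (forall i, eqm m (P i) (Q i)) ->
  eqm m (\sum_(i < n) P i) (\sum_(i < n) Q i).
Proof. by move=> h i hi; rewrite !coef_sum; apply: eq_bigr => j _; apply: h. Qed.
Lemma eqm_mul m p q p' q' : eqm m p p' -> eqm m q q' -> eqm m (p * q) (p' * q').
Proof.
move=> h1 h2 i hi; rewrite !coefM; apply: eq_bigr => j _.
have hj : (j <= i)%N by rewrite -ltnS.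
rewrite h1 ?h2 //; [by apply: leq_ltn_trans hi; rewrite leq_subr|by apply: leq_ltn_trans hi].
Qed.
Lemma eqm_mulX m (c : {poly F}) p q : c`_0 = 0 -> eqm m p q -> eqm m.+1 (c * p) (c * q).
Proof.
move=> c0 h i hi; rewrite !coefM; apply: eq_bigr => [[j hj]] _ /=.
case: j hj => [|j] hj; first by rewrite c0 !mul0r.
rewrite h //; lia.
Qed.

Lemma sum_tail (G : nat -> F) n m : (n <= m)%N ->
  (forall i, (n <= i)%N -> (i < m)%N -> G i = 0) ->
  \sum_(i < m) G i = \sum_(i < n) G i.
Proof.
elim: m => [|m IH] hnm hG; first by move: hnm; rewrite leqn0 => /eqP->.
move: hnm; rewrite leq_eqVlt => /orP[/eqP->//|hlt].
rewrite big_ord_recr /= hG // ?addr0.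
all: try (move: hlt; lia).
apply: IH; first by lia.
by move=> i h1 h2; apply: hG => //; apply: ltnW.
Qed.

Lemma powX0 q : q`_0 = 0 -> forall k n, (n < k)%N -> (q ^+ k)`_n = 0.
Proof.
move=> q0; elim=> [//|k IH] n hn; rewrite exprS coefM.
apply: big1 => [[j hj]] _ /=.
case: j hj => [|j] hj; first by rewrite q0 mul0r.
rewrite IH ?mulr0 //; lia.
Qed.

Lemma powX_diag q : q`_0 = 0 -> forall k, (q ^+ k)`_k = q`_1 ^+ k.
Proof.
move=> q0; elim=> [|k IH]; first by rewrite !expr0 coef1.
rewrite exprS coefM big_ord_recl /= q0 mul0r add0r.
rewrite big_ord_recl /= subSS subn0 IH -exprS.
rewrite big1 ?addr0 // => [[j hj]] _ /=.
rewrite powX0 ?mulr0 //; rewrite /bump /=; lia.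
Qed.

Lemma comp_coef p q n : q`_0 = 0 ->
  (p \Po q)`_n = \sum_(i < n.+1) p`_i * (q ^+ i)`_n.
Proof.
move=> q0; rewrite coef_comp_poly.
rewrite -(@sum_tail (fun i => p`_i * (q ^+ i)`_n) (size p) (size p + n.+1)) ?leq_addr //; last first.
  by move=> i h1 h2; rewrite nth_default ?mul0r.
rewrite (@sum_tail (fun i => p`_i * (q ^+ i)`_n) n.+1) ?leq_addl //.
by move=> i h1 h2; rewrite powX0 ?mulr0.
Qed.

Lemma eqm_exp m q q' k : eqm m q q' -> eqm m (q ^+ k) (q' ^+ k).
Proof. by move=> h; elim: k => [|k IH]; rewrite ?expr0 // !exprS; apply: eqm_mul. Qed.

Lemma eqm_comp m p p' q q' : eqm m p p' -> eqm m q q' -> q`_0 = 0 -> q'`_0 = 0 ->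
  eqm m (p \Po q) (p' \Po q').
Proof.
move=> h1 h2 q0 q'0 n hn; rewrite !comp_coef //; apply: eq_bigr => [[i hi]] _ /=.
rewrite h1; last by apply: leq_ltn_trans hn.
by rewrite (@eqm_exp _ _ _ i h2).
Qed.

Lemma spow_tr K f k n : (n < K)%N -> spow f k n = ((tr K f) ^+ k)`_n.
Proof.
elim: k n => [|k IH] n hn; first by rewrite expr0 coef1.
rewrite exprS coefM /spow iterS -/(spow f k) /smul; apply: eq_bigr => [[j hj]] _ /=.
rewrite coef_tr IH; last by apply: leq_ltn_trans hn; rewrite leq_subr.
by rewrite ifT //; apply: leq_ltn_trans hn.
Qed.

Lemma smul_tr K f h n : (n < K)%N -> smul f h n = (tr K f * tr K h)`_n.
Proof.
move=> hn; rewrite coefM /smul; apply: eq_bigr => [[j hj]] _ /=.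
rewrite !coef_tr !ifT //; [by apply: leq_ltn_trans hn; rewrite leq_subr|by apply: leq_ltn_trans hn].
Qed.

Lemma eqm_tr_smul K f h : eqm K (tr K (smul f h)) (tr K f * tr K h).
Proof. by move=> i hi; rewrite coef_tr hi (smul_tr _ _ _ _ hi). Qed.

Lemma scomp_tr K f h n : h 0%N = 0 -> (n < K)%N -> scomp f h n = (tr K f \Po tr K h)`_n.
Proof.
move=> h0 hn; rewrite comp_coef; last by rewrite coef_tr (leq_ltn_trans _ hn).
apply: eq_bigr => [[i hi]] _ /=; rewrite coef_tr ifT; last by apply: leq_ltn_trans hn.
by rewrite (spow_tr _ _ _ _ hn).
Qed.


Lemma scomp0 f h : scomp f h 0%N = f 0%N.
Proof. by rewrite /scomp big_ord1 /= /sone /= mulr1. Qed.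

Lemma scomp1 f h : scomp f h 1%N = f 1%N * h 1%N.
Proof.
change (\sum_(k < 2) f k * spow h k 1%N = f 1%N * h 1%N).
rewrite big_ord_recr big_ord1 /=.
have s1 : sone F 1%N = 0 by rewrite /sone.
have s0 : sone F 0%N = 1 by rewrite /sone.
have -> : smul h (sone F) 1%N = h 1%N.
  change (\sum_(i < 2) h i * sone F (1 - i)%N = h 1%N).
  by rewrite big_ord_recr big_ord1 /= s1 s0 mulr0 add0r mulr1.
by rewrite s1 mulr0 add0r.
Qed.

Lemma tr_sX K : (1 < K)%N -> tr K (sX F) = 'X.
Proof.
move=> hK; apply/polyP => i; rewrite coef_tr coefX /sX.
by case: ifP => // hi; case: eqP => // ei; move: hi; rewrite ei hK.
Qed.

Lemma scomp_Xl h : h 0%N = 0 -> scomp (sX F) h = h.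
Proof.
move=> h0; apply: functional_extensionality => n.
rewrite (scomp_tr n.+2 _ _ _ h0) // tr_sX // comp_polyX coef_tr.
by rewrite ifT // ltnW.
Qed.

Lemma scomp_Xr f : scomp f (sX F) = f.
Proof.
apply: functional_extensionality => n.
rewrite (scomp_tr n.+2 _ _ _ (erefl _ : sX F 0%N = 0)) // tr_sX // comp_polyXr coef_tr.
by rewrite ifT // ltnW.
Qed.

Lemma scompA f g h : g 0%N = 0 -> h 0%N = 0 ->
  scomp f (scomp g h) = scomp (scomp f g) h.
Proof.
move=> g0 h0; apply: functional_extensionality => n.
have sgh0 : scomp g h 0%N = 0 by rewrite scomp0.
rewrite (scomp_tr n.+1 f (scomp g h) n sgh0 (ltnSn n)).
rewrite (scomp_tr n.+1 (scomp f g) h n h0 (ltnSn n)).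
have e1 : eqm n.+1 (tr n.+1 (scomp g h)) (tr n.+1 g \Po tr n.+1 h).
  by move=> i hi; rewrite coef_tr hi (scomp_tr _ _ _ _ h0 hi).
have e2 : eqm n.+1 (tr n.+1 (scomp f g)) (tr n.+1 f \Po tr n.+1 g).
  by move=> i hi; rewrite coef_tr hi (scomp_tr _ _ _ _ g0 hi).
have t0 : (tr n.+1 (scomp g h))`_0 = 0 by rewrite coef_tr.
have th0 : (tr n.+1 h)`_0 = 0 by rewrite coef_tr.
rewrite (eqm_comp _ _ _ _ _ (eqm_refl _ (tr n.+1 f)) e1 t0 _ n (ltnSn n)); last by rewrite -e1.
rewrite comp_polyA.
by rewrite -(eqm_comp _ _ _ _ _ e2 (eqm_refl _ (tr n.+1 h)) th0 th0 n (ltnSn n)).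
Qed.

Lemma coef_build (P : nat -> {poly F}) (a : nat -> F) : P 0%N = 0 ->
  (forall N, P N.+1 = P N + a N *: 'X^N) ->
  forall N i, (P N)`_i = if (i < N)%N then a i else 0.
Proof.
move=> P0 PS; elim=> [|N IH] i; first by rewrite P0 coef0.
rewrite PS coefD coefZ coefXn IH.
case: (ltngtP i N) => [hlt|hgt|->].
- by rewrite ltnS ltnW // mulr0 addr0.
- by rewrite ltnS leqNgt hgt mulr0 addr0.
- by rewrite ltnSn mulr1 add0r.
Qed.

Fixpoint Lp (f : series F) (n : nat) : {poly F} :=
  if n is m.+1 then Lp f m + ((sX F m - (Lp f m \Po tr m.+1 f)`_m) / f 1%N ^+ m) *: 'X^m
  else 0.
Definition Linv f : series F := fun n => (Lp f n.+1)`_n.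

Lemma tr_Linv f N : tr N (Linv f) = Lp f N.
Proof.
have cb := coef_build (Lp f) (fun m => (sX F m - (Lp f m \Po tr m.+1 f)`_m) / f 1%N ^+ m)
  erefl (fun _ => erefl).
apply/polyP => i; rewrite coef_tr /Linv !cb ltnSn.
by case: ifP.
Qed.

Lemma Lp_spec f : f 0%N = 0 -> f 1%N != 0 -> forall N n K, (n < N)%N -> (n < K)%N ->
  (Lp f N \Po tr K f)`_n = sX F n.
Proof.
move=> f0 f1; elim=> [//|N IH] n K hn hK.
have T0 : (tr K f)`_0 = 0 by rewrite coef_tr; case: ifP.
rewrite /= comp_polyD comp_polyZ comp_Xn_poly coefD coefZ.
rewrite ltnS leq_eqVlt in hn; case/orP: hn => [/eqP en|hn]; last first.
  by rewrite powX0 // mulr0 addr0 IH.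
subst n; rewrite powX_diag //.
have -> : (tr K f)`_1 ^+ N = f 1%N ^+ N.
  by case: N {IH} hK => [|N] hK; rewrite ?expr0 // coef_tr ifT //; lia.
rewrite divfK ?expf_neq0 //.
have E : eqm N.+1 (tr K f) (tr N.+1 f).
  by move=> i hi; rewrite !coef_tr hi ifT //; lia.
have T1 : (tr N.+1 f)`_0 = 0 by rewrite coef_tr.
rewrite (eqm_comp _ _ _ _ _ (eqm_refl _ (Lp f N)) E T0 T1 N (ltnSn N)).
by rewrite addrC subrK.
Qed.

Lemma Linv_spec f : f 0%N = 0 -> f 1%N != 0 -> scomp (Linv f) f = sX F.
Proof.
move=> f0 f1; apply: functional_extensionality => n.
by rewrite (scomp_tr n.+1 _ _ _ f0 (ltnSn n)) tr_Linv Lp_spec.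
Qed.

Fixpoint Ip (f : series F) (n : nat) : {poly F} :=
  if n is m.+1 then Ip f m + ((sone F m - (tr m.+1 f * Ip f m)`_m) / f 0%N) *: 'X^m
  else 0.
Definition Iinv f : series F := fun n => (Ip f n.+1)`_n.

Lemma tr_Iinv f N : tr N (Iinv f) = Ip f N.
Proof.
have cb := coef_build (Ip f) (fun m => (sone F m - (tr m.+1 f * Ip f m)`_m) / f 0%N)
  erefl (fun _ => erefl).
apply/polyP => i; rewrite coef_tr /Iinv !cb ltnSn.
by case: ifP.
Qed.

Lemma Ip_spec f : f 0%N != 0 -> forall N n K, (n < N)%N -> (n < K)%N ->
  (tr K f * Ip f N)`_n = sone F n.
Proof.
move=> f0; elim=> [//|N IH] n K hn hK.
rewrite /= mulrDr -scalerAr coefD coefZ coefMXn.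
rewrite ltnS leq_eqVlt in hn; case/orP: hn => [/eqP en|hn]; last first.
  by rewrite hn mulr0 addr0 IH.
subst n; rewrite ltnn subnn coef_tr ifT; last by lia.
rewrite divfK //.
have E : eqm N.+1 (tr K f) (tr N.+1 f).
  by move=> i hi; rewrite !coef_tr hi ifT //; lia.
rewrite (eqm_mul _ _ _ _ _ E (eqm_refl _ (Ip f N)) N (ltnSn N)).
by rewrite addrC subrK.
Qed.

Lemma Iinv_spec f : f 0%N != 0 -> smul f (Iinv f) = sone F.
Proof.
move=> f0; apply: functional_extensionality => n.
by rewrite (smul_tr n.+1 _ _ _ (ltnSn n)) tr_Iinv Ip_spec.
Qed.

Lemma sinv_spec f : f 0%N != 0 -> smul f (sinv f) = sone F.
Proof. move=> f0; exact (epsilon_spec (inhabits (sone F)) (fun g => smul f g = sone F) (ex_intro _ (Iinv f) (Iinv_spec f f0))). Qed.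


Lemma smulE f x n : smul f x n = \sum_(i < n.+1) f i * x (n - i)%N.
Proof. by []. Qed.

Lemma smul_unique f x y : f 0%N != 0 -> smul f x = smul f y -> x = y.
Proof.
move=> f0 e.
suff H : forall n i, (i <= n)%N -> x i = y i.
  by apply: functional_extensionality => i; apply: (H i).
elim=> [|n IH] i hi.
  move: hi; rewrite leqn0 => /eqP ->.
  have := congr1 (fun s => s 0%N) e.
  by rewrite /= !smulE !big_ord1 /= => /(mulfI f0).
rewrite leq_eqVlt in hi; case/orP: hi => [/eqP->|hi]; last by apply: IH.
have e2 : \sum_(i < n.+2) f i * x (n.+1 - i)%N = \sum_(i < n.+2) f i * y (n.+1 - i)%N.
  by rewrite -!smulE e.
rewrite big_ord_recl [X in _ = X]big_ord_recl /= !subn0 in e2.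
have s : \sum_(j < n.+1) f (bump 0 j) * x (n.+1 - bump 0 j)%N =
         \sum_(j < n.+1) f (bump 0 j) * y (n.+1 - bump 0 j)%N.
  by apply: eq_bigr => j _; rewrite IH // /bump; lia.
by move: e2; rewrite s => /addIr/(mulfI f0).
Qed.

Lemma exists_cinv f : f 0%N = 0 -> f 1%N != 0 -> exists K, is_cinv f K.
Proof.
move=> f0 f1.
set L := Linv f.
have hL := Linv_spec f f0 f1.
have L0 : L 0%N = 0 by have := scomp0 L f; rewrite hL.
have L1 : L 1%N != 0.
  have := scomp1 L f; rewrite hL /sX /= => e.
  by apply/eqP => h; move: e; rewrite h mul0r => /eqP; rewrite oner_eq0.
have hL' := Linv_spec L L0 L1.
have ef : Linv L = f.
  by rewrite -[f](scomp_Xl f f0) -hL' -scompA // hL scomp_Xr.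
exists L; split => //; split => //.
by rewrite -{1}ef.
Qed.

Lemma cinv_spec f : f 0%N = 0 -> f 1%N != 0 -> is_cinv f (cinv f).
Proof.
move=> f0 f1; exact (epsilon_spec (inhabits (sone F)) (is_cinv f) (exists_cinv f f0 f1)).
Qed.

Lemma cinv_right f H : f 0%N = 0 -> f 1%N != 0 -> H 0%N = 0 -> scomp f H = sX F ->
  cinv f = H.
Proof.
move=> f0 f1 H0 hH; have [K0 [hK1 hK2]] := cinv_spec f f0 f1.
by rewrite -[H](scomp_Xl H H0) -hK2 -scompA // hH scomp_Xr.
Qed.

Lemma left_unique a b h : h 0%N = 0 -> h 1%N != 0 -> scomp a h = sX F -> scomp b h = sX F ->
  a = b.
Proof.
move=> h0 h1 ha hb; have [K0 [hK1 hK2]] := cinv_spec h h0 h1.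
rewrite -(scomp_Xr a) -(scomp_Xr b) -hK1 !scompA // ha hb //.
Qed.

End Gen.
Arguments tr {F}.
Arguments coef_tr {F}.
Arguments eqm {F}.
Arguments sum_tail {F}.
Arguments powX0 {F}.
Arguments powX_diag {F}.
Arguments comp_coef {F}.
Arguments spow_tr {F}.
Arguments smul_tr {F}.
Arguments eqm_tr_smul {F}.
Arguments scomp_tr {F}.
Arguments scomp0 {F}.
Arguments scomp1 {F}.
Arguments tr_sX {F}.
Arguments scomp_Xl {F}.
Arguments scomp_Xr {F}.
Arguments scompA {F}.
Arguments sinv_spec {F}.
Arguments smulE {F}.
Arguments smul_unique {F}.
Arguments exists_cinv {F}.
Arguments cinv_spec {F}.
Arguments cinv_right {F}.
Arguments left_unique {F}.
Arguments eqm_exp {F}.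
Arguments eqm_comp {F}.
Arguments Linv_spec {F}.
Arguments eqm_trans {F} {m p q r}.
Arguments eqm_sym {F} {m p q}.
Arguments eqm_le {F} {m m' p q}.
Arguments eqm_add {F} {m p q p' q'}.
Arguments eqm_scale {F} {m a p q}.
Arguments eqm_sum {F} {m n P Q}.
Arguments eqm_mul {F} {m p q p' q'}.
Arguments eqm_mulX {F} {m c p q}.
Arguments eqm_refl {F} {m p}.



Section E1part.
Variable F : fieldType.

Definition act (a : E1 F) (M p : nat) : F :=
  coefE1 a M p + \sum_(n < p) (if (p - n <= M)%N then coefE1 a (M - (p - n)) n else 0).

Lemma coefE1_out (a : E1 F) m n : (size a <= m)%N -> coefE1 a m n = 0.
Proof. by move=> h; rewrite /coefE1 nth_default. Qed.

Lemma size_emul (a b : E1 F) : size (emul a b) = (size a + size b)%N.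
Proof. by rewrite size_mkseq. Qed.

Lemma col0 (a b : E1 F) M :
  coefE1 (emul a b) M 0 = \sum_(p < size b) coefE1 b p 0 * act a M p.
Proof.
case: (ltnP M (size a + size b)) => hM.
- rewrite {1}/coefE1 /emul nth_mkseq //; cbv beta.
  rewrite -big_split; apply: eq_bigr => p _.
  rewrite big_ord1 add0n subn0 /act mulrDr mulr_sumr; congr (_ + _); first by rewrite mulrC.
  by apply: eq_bigr => n _; case: ifP => _; rewrite ?mulr0 // mulrC.
- rewrite coefE1_out ?size_emul //; symmetry; apply: big1 => [[p hp]] _ /=.
  rewrite /act (coefE1_out a M p) ?add0r; last by lia.
  rewrite big1 ?mulr0 // => [[n hn]] _ /=; case: ifP => // _.
  by rewrite coefE1_out //; lia.
Qed.

Variable g : series F.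
Definition Ag : E1 F := emul (one_plus_l F) (ser_lstar g).

Lemma coefA m n : coefE1 Ag m n = if (m < 2)%N then g n else 0.
Proof.
have copl : forall m k, coefE1 (one_plus_l F) m k = if (m < 2)%N then sone F k else 0.
  by move=> [|[|m']] k //; rewrite coefE1_out.
case: (ltnP m 3) => hm; last by rewrite coefE1_out ?size_emul //; case: ifP => //; lia.
rewrite {1}/coefE1 /emul nth_mkseq //; cbv beta.
have -> : size (ser_lstar g) = 1%N by [].
rewrite !big_ord1 big_ord0 addr0 addn0.
rewrite (eq_bigr (fun q : 'I_n.+1 => (if (m < 2)%N then sone F (n - q)%N else 0) * g q)); last by move=> q _; rewrite copl.

case: ifP => _; last by rewrite big1 // => q _; rewrite mul0r.
rewrite big_ord_recr /= subnn /sone eqxx mul1r big1 ?add0r // => [[q hq]] _ /=.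
by rewrite subn_eq0 leqNgt hq mul0r.
Qed.

Lemma sum_pick n c (x : nat -> F) :
  \sum_(i < n) (if (i : nat) == c then x i else 0) = if (c < n)%N then x c else 0.
Proof.
elim: n => [|n IH]; first by rewrite big_ord0.
rewrite big_ord_recr /= IH.
case: (ltngtP c n) => [h|h|->].
- by rewrite ltnS ltnW // addr0.
- by rewrite ltnS leqNgt h addr0.
- by rewrite ltnSn add0r.
Qed.

Lemma actA j m : act Ag j m =
  (if (j <= m)%N then g (m - j)%N else 0) +
  (if (0 < j)%N && (j <= m.+1)%N then g (m.+1 - j)%N else 0).
Proof.
rewrite /act coefA.
rewrite (eq_bigr (fun n : 'I_m =>
   (if (0 < j)%N && (j <= m)%N then (if (n : nat) == (m - j)%N then g n else 0) else 0) +
   (if (1 < j)%N && (j <= m.+1)%N then (if (n : nat) == (m.+1 - j)%N then g n else 0) else 0)));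
  last first.
  move=> [n hn] _ /=; rewrite coefA.
  do ?(case: ifPn => ?); rewrite ?addr0 ?add0r //; try (exfalso; lia).
rewrite big_split /=.
have sp : forall (P : bool) c, \sum_(i < m) (if P then (if (i : nat) == c then g i else 0) else 0) =
   if P then (if (c < m)%N then g c else 0) else 0.
  by move=> [] c; [rewrite sum_pick | rewrite big1].
rewrite !sp.
case: j => [|[|j]] /=.
- by rewrite subn0 !addr0.
- rewrite addr0 addrC; congr (_ + _); last by rewrite subSS subn0.
  by case: ifP => // h; rewrite ifT //; lia.
- rewrite add0r; congr (_ + _).
    by case: ifP => // h; rewrite ifT //; lia.
  by case: ifP => // h; rewrite ifT //; lia.
Qed.


Definition v k j := coefE1 (epow Ag k) j 0.

Lemma size_epowA k : size (epow Ag k) = (3 * k).+1.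
Proof.
elim: k => // k IH.
change (size (emul Ag (epow Ag k)) = (3 * k.+1).+1).
by rewrite size_emul IH size_emul /=; lia.
Qed.

Lemma v_rec k K j : ((3 * k).+1 <= K)%N -> v k.+1 j = \sum_(p < K) act Ag j p * v k p.
Proof.
move=> hK; rewrite /v.
change (coefE1 (emul Ag (epow Ag k)) j 0 = \sum_(p < K) act Ag j p * coefE1 (epow Ag k) p 0).
rewrite col0 size_epowA.
rewrite (sum_tail (fun p => act Ag j p * coefE1 (epow Ag k) p 0) ((3*k).+1) K) //.
  by apply: eq_bigr => p _; rewrite mulrC.
by move=> i h1 h2; rewrite coefE1_out ?mulr0 // size_epowA.
Qed.

Lemma v0 j : v 0 j = (j == 0%N)%:R.
Proof. by case: j => [|j] //; rewrite /v coefE1_out. Qed.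

Lemma main_poly (w : series F) : w 0%N = 0 ->
  (forall K, eqm K (tr K w * ((1 + 'X) * tr K g)) 'X) ->
  forall n, \sum_(k < n.+1) tau1 (epow Ag k) * spow w k n = (n == 0%N)%:R + (n == 1%N)%:R.
Proof.
move=> w0 hw N.
pose K := (3 * N).+2.
pose W := tr K w.
have W0 : W`_0 = 0 by rewrite coef_tr.
pose Phi := fun j => \sum_(k < N.+1) v k j *: W ^+ k.
pose Psi := fun j : nat => (1 + 'X) * 'X^j : {poly F}.
have rec : forall k j, (k < N)%N -> v k.+1 j = \sum_(p < K) act Ag j p * v k p.
  by move=> k j hk; apply: v_rec; rewrite /K; lia.
have C1 : forall j, eqm N.+1 (Phi j) ((j == 0%N)%:R%:P + W * \sum_(p < K) act Ag j p *: Phi p).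
  move=> j.
  have e1 : W * \sum_(p < K) act Ag j p *: Phi p =
      \sum_(k < N.+1) (\sum_(p < K) act Ag j p * v k p) *: W ^+ k.+1.
    rewrite mulr_sumr.
    transitivity (\sum_(p < K) \sum_(k < N.+1) (act Ag j p * v k p) *: W ^+ k.+1).
      apply: eq_bigr => p _; rewrite /Phi -scalerAr mulr_sumr scaler_sumr.
      by apply: eq_bigr => k _; rewrite -scalerAr -exprS scalerA.
    by rewrite exchange_big; apply: eq_bigr => k _; rewrite scaler_suml.
  have e2 : Phi j = (j == 0%N)%:R%:P + \sum_(k < N) (\sum_(p < K) act Ag j p * v k p) *: W ^+ k.+1.
    rewrite /Phi big_ord_recl v0 expr0 alg_polyC; congr (_ + _).
    by apply: eq_bigr => [[k hk]] _ /=; rewrite (rec k j hk).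
  by move=> i hi; rewrite e1 e2 (@big_ord_recr _ _ _ N) /= addrA [in RHS]coefD coefZ powX0 // mulr0 addr0.
have hK : (N.+1 <= K)%N by rewrite /K; lia.
have C2 : forall j, eqm N.+1 (Psi j) ((j == 0%N)%:R%:P + W * \sum_(p < K) act Ag j p *: Psi p).
  move=> j.
  have L : \sum_(p < K) act Ag j p *: Psi p = (1 + 'X) * \poly_(p < K) act Ag j p.
    by rewrite poly_def mulr_sumr; apply: eq_bigr => p _; rewrite /Psi scalerAr.
  pose B : {poly F} := if j is j'.+1 then 'X^j + 'X^j' else 1.
  have LB : eqm K (\poly_(p < K) act Ag j p) (B * tr K g).
    move=> i hi; rewrite coef_poly hi actA /B.
    case: j {L B} => [|j'] /=.
      by rewrite mul1r coef_tr hi subn0 addr0.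
    rewrite mulrDl coefD !coefXnM !coef_tr.
    rewrite subSS; congr (_ + _); do ?(case: ifPn => ?); try (exfalso; lia); by [].
  have key : eqm K (W * ((1 + 'X) * \poly_(p < K) act Ag j p)) (B * 'X).
    apply: (eqm_trans (q := W * ((1 + 'X) * (B * tr K g)))).
      exact: (eqm_mul eqm_refl (eqm_mul eqm_refl LB)).
    have -> : W * ((1 + 'X) * (B * tr K g)) = B * (W * ((1 + 'X) * tr K g)) by ring.
    exact: (eqm_mul eqm_refl (hw K)).
  have PB : Psi j = (j == 0%N)%:R%:P + B * 'X.
    rewrite /Psi /B; case: j {L LB key B} => [|j'] /=.
      by rewrite expr0 mulr1 mul1r polyC1.
    by rewrite polyC0 add0r !exprS; ring.
  move=> i hi; rewrite PB L !coefD (key i) //; lia.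
have C3 : forall m, (m <= N.+1)%N -> forall j, eqm m (Phi j) (Psi j).
  elim=> [|m IH] hm j; first by [].
  apply: (eqm_trans (eqm_le hm (C1 j))).
  apply: (eqm_trans _ (eqm_sym (eqm_le hm (C2 j)))).
  apply: (eqm_add eqm_refl); apply: (eqm_mulX W0).
  apply: eqm_sum => p; apply: eqm_scale; apply: IH; lia.
have := C3 N.+1 (leqnn _) 0%N N (ltnSn N).
rewrite /Phi /Psi coef_sum expr0 mulr1 coefD coef1 coefX => <-.
apply: eq_bigr => k _; rewrite coefZ (spow_tr K) //; lia.
Qed.

End E1part.


Section Fin.
Variable F : fieldType.

Lemma scompE (f h : series F) n : scomp f h n = \sum_(k < n.+1) f k * spow h k n.
Proof. by []. Qed.

Lemma smul_comm (f h : series F) : smul f h = smul h f.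
Proof.
by apply: functional_extensionality => n; rewrite !(smul_tr n.+1) // mulrC.
Qed.

Lemma log_spec (c : nat -> F) : c 0%N = 1 ->
  [/\ log_genus c 0%N = 0, log_genus c 1%N = 1 & log_genus c 1%N != 0].
Proof. by move=> c0; rewrite /log_genus /= c0 divr1 oner_neq0. Qed.

Lemma g0_spec (c : nat -> F) : c 0%N = 1 -> invlog_over_z c 0%N = 1.
Proof.
move=> c0; have [l0 l1 l1'] := log_spec c c0.
have [G0 [hl _]] := cinv_spec (log_genus c) l0 l1'.
have := scomp1 (log_genus c) (cinv (log_genus c)); rewrite hl l1 mul1r /sX /=.
by rewrite /invlog_over_z => <-.
Qed.

Lemma distrX (a : E1 F) k : distr a 'X^k = tau1 (epow a k).
Proof.
rewrite /distr size_polyXn big_ord_recr /= coefXn eqxx mul1r big1 ?add0r // => i _.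
by rewrite coefXn (ltn_eqF (ltn_ord i)) mul0r.
Qed.

Lemma S_spec (c : nat -> F) : c 0%N = 1 -> Stransform (distr (A_genus c)) = Q_genus c.
Proof.
move=> c0; set g := invlog_over_z c.
have g0 : g 0%N = 1 by apply: g0_spec.
pose s1z : series F := fun n => (n == 0%N)%:R + (n == 1%N)%:R.
pose h := smul s1z g.
have h0 : h 0%N != 0.
  by rewrite /h smulE big_ord1 /= g0 /s1z /= mulr1 addr0 oner_neq0.
pose u := sinv h.
have hu : smul h u = sone F by apply: sinv_spec.
pose w : series F := fun n => if n is n'.+1 then u n' else 0.
have w0 : w 0%N = 0 by [].
have E2 : forall K, eqm K ((1 + 'X) * tr K g) (tr K h).
  move=> K; apply: eqm_sym; apply: (eqm_trans (eqm_tr_smul K s1z g)).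
  apply: (eqm_mul _ eqm_refl) => i hi.
  by rewrite coef_tr hi coefD coef1 coefX.
have E4 : forall K, eqm K (tr K h * tr K u) 1.
  move=> K; apply: (eqm_trans (eqm_sym (eqm_tr_smul K h u))).
  by move=> i hi; rewrite hu coef_tr hi coef1.
have hw : forall K, eqm K (tr K w * ((1 + 'X) * tr K g)) 'X.
  move=> K.
  have E1 : eqm K (tr K w) ('X * tr K u).
    move=> [|i] hi; rewrite coef_tr hi coefXM //= coef_tr ifT //; lia.
  apply: (eqm_trans (eqm_mul E1 (E2 K))).
  have -> : 'X * tr K u * tr K h = 'X * (tr K h * tr K u) by ring.
  rewrite -[X in eqm _ _ X]mulr1.
  exact: (eqm_mul eqm_refl (E4 K)).
have mp := main_poly F g w w0 hw.
set M := moment_series (distr (A_genus c)).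
have Mk : forall k, M k.+1 = tau1 (epow (Ag F g) k.+1) by move=> k; rewrite /M /= distrX.
have hMw : scomp M w = sX F.
  apply: functional_extensionality => n.
  have := mp n; rewrite big_ord_recl /= scompE big_ord_recl /=.
  have -> : tau1 (eone F) = 1 by [].
  rewrite mul0r add0r mul1r.
  set S1 := \sum_(i < n) _.
  set S2 := \sum_(i < n) _.
  have -> : S2 = S1 by apply: eq_bigr => i _; rewrite distrX.
  by rewrite /sone /sX => /addrI.
have M1 : M 1%N != 0.
  apply/eqP => e; have := scomp1 M w; rewrite hMw e mul0r /sX /=.
  by move/eqP; rewrite oner_eq0.
have hc : cinv M = w by apply: cinv_right.
set S := Stransform (distr (A_genus c)).
have SE : forall n, S n = u n + w n by move=> n; rewrite /S /Stransform -/M hc.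
have hS : smul g S = sone F.
  apply: functional_extensionality => n.
  rewrite (smul_tr n.+1) //.
  have ES : eqm n.+1 (tr n.+1 S) ((1 + 'X) * tr n.+1 u).
    move=> i hi; rewrite coef_tr hi SE mulrDl mul1r coefD coefXM.
    case: i hi => [|i] hi /=; rewrite !coef_tr; do ?(case: ifPn => ?); rewrite ?addr0 //; exfalso; lia.
  rewrite (eqm_mul eqm_refl ES n (ltnSn n)).
  have -> : tr n.+1 g * ((1 + 'X) * tr n.+1 u) = ((1 + 'X) * tr n.+1 g) * tr n.+1 u by ring.
  rewrite (eqm_mul (E2 n.+1) eqm_refl n (ltnSn n)) (E4 n.+1 n (ltnSn n)) coef1.
  by [].
have g0' : g 0%N != 0 by rewrite g0 oner_neq0.
apply: (smul_unique g) => //.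
by rewrite hS sinv_spec.
Qed.


Lemma coefAg (c : nat -> F) m n :
  coefE1 (A_genus c) m n = if (m < 2)%N then invlog_over_z c n else 0.
Proof. exact: coefA. Qed.

Lemma Qinj (c c' : nat -> F) : c 0%N = 1 -> c' 0%N = 1 -> Q_genus c = Q_genus c' ->
  invlog_over_z c = invlog_over_z c'.
Proof.
move=> c0 c'0 e.
have g0 : invlog_over_z c 0%N != 0 by rewrite g0_spec // oner_neq0.
have g'0 : invlog_over_z c' 0%N != 0 by rewrite g0_spec // oner_neq0.
have hq := sinv_spec _ g0; have hq' := sinv_spec _ g'0.
rewrite -/(Q_genus c) in hq; rewrite -/(Q_genus c') -e in hq'.
have Q0 : Q_genus c 0%N != 0.
  apply/eqP => q0; have := congr1 (fun s => s 0%N) hq.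
  by rewrite /= smulE big_ord1 /= q0 mulr0 /sone /= => /eqP; rewrite eq_sym oner_eq0.
apply: (smul_unique (Q_genus c)) => //.
by rewrite smul_comm hq smul_comm hq'.
Qed.

Lemma inj_gen (hchar : forall n, (n.+1)%:R != 0 :> F) (c c' : nat -> F) :
  c 0%N = 1 -> c' 0%N = 1 -> invlog_over_z c = invlog_over_z c' -> c = c'.
Proof.
move=> c0 c'0 e.
have [l0 l1 l1'] := log_spec c c0.
have [l0' l1'' l1'''] := log_spec c' c'0.
have [G0 [hl _]] := cinv_spec (log_genus c) l0 l1'.
have [G0' [hl' _]] := cinv_spec (log_genus c') l0' l1'''.
have eG : cinv (log_genus c) = cinv (log_genus c').
  apply: functional_extensionality => [[|n]]; first by rewrite G0 G0'.
  exact: (congr1 (fun s => s n) e).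
have G1 : cinv (log_genus c) 1%N != 0.
  have := scomp1 (log_genus c) (cinv (log_genus c)); rewrite hl l1 mul1r /sX /= => <-.
  exact: oner_neq0.
rewrite -eG in hl'.
have el := left_unique _ _ _ G0 G1 hl hl'.
apply: functional_extensionality => n.
have := congr1 (fun s => s n.+1) el; rewrite /log_genus /=.
by move=> /(congr1 (fun x => x * n.+1%:R)); rewrite !divfK.
Qed.
Lemma main_gen (hchar : forall n, (n.+1)%:R != 0 :> F) (c : nat -> F) : c 0%N = 1 ->
    [/\ tau1 (A_genus c) != 0,
        Stransform (distr (A_genus c)) = Q_genus c
      & forall c' : nat -> F, c' 0%N = 1 -> c <> c' ->
          (exists m n, coefE1 (A_genus c) m n <> coefE1 (A_genus c') m n)
          /\ distr (A_genus c) <> distr (A_genus c')].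
Proof.
move=> c0; split.
- by rewrite /tau1 coefAg /= g0_spec // oner_neq0.
- exact: S_spec.
- move=> c' c'0 hne; split.
  + apply: NNPP => H; apply: hne; apply: inj_gen => //.
    apply: functional_extensionality => n; apply: NNPP => hn; apply: H; exists 0%N, n.
    by rewrite !coefAg.
  + move=> hd; apply: hne; apply: inj_gen => //; apply: Qinj => //.
    have e1 := S_spec c c0; have e2 := S_spec c' c'0.
    apply: (eq_trans (esym e1)); rewrite hd; exact: e2.
Qed.
End Fin.

Local Open Scope complex_scope.
Theorem mainTheorem5 (R : realType) :
  forall c : nat -> R[i], c 0%N = 1 ->
    [/\ tau1 (A_genus c) != 0,
        Stransform (distr (A_genus c)) = Q_genus c
      & forall c' : nat -> R[i], c' 0%N = 1 -> c <> c' ->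
          (exists m n, coefE1 (A_genus c) m n <> coefE1 (A_genus c') m n)
          /\ distr (A_genus c) <> distr (A_genus c')].
Proof.
move=> c; apply: main_gen => n; by rewrite pnatr_eq0.
Qed.
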